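(* Let $(X,A,Y)$ be jointly distributed random variables with $A,Y\in\{0,1\}$. Consider all (possibly randomized) representations $Z=g(X)$, i.e. $Z=g(X,S)$ for a measurable map $g$ and an auxiliary random variable $S$ independent of $(X,A,Y)$. Then the set $$\mathcal{R}_{\mathrm{CE}}:=\{(I(Y;Z),\,I(A;Z)) : Z=g(X)\}\subseteq\mathbb{R}^2$$ is convex.
   Context: $I(\cdot;\cdot)$ denotes mutual information. *)

(* Defs.v *)
From HB Require Import structures.
From mathcomp Require Import all_boot all_order all_algebra.
From mathcomp Require Import all_classical all_reals all_analysis.
Set Implicit Arguments. Unset Strict Implicit. Unset Printing Implicit Defensive.
Import Order.TTheory GRing.Theory Num.Theory.
Local Open Scope classical_set_scope.
Local Open Scope ring_scope.

Definition fin_meas_partition d (T : measurableType d) (n : nat)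
    (F : 'I_n -> set T) : Prop :=
  [/\ forall i, measurable (F i),
      forall i j, i != j -> F i `&` F j = set0
    & forall t, exists i, F i t].

Definition mi_term (R : realType) (p a b : R) : R :=
  if p == 0 then 0 else p * ln (p / (a * b)).

Definition quantized_mi (R : realType) dO (O : measurableType dO)
    (P : set O -> \bar R) du (TU : measurableType du) dv (TV : measurableType dv)
    (U : O -> TU) (V : O -> TV) n (F : 'I_n -> set TU) m (G : 'I_m -> set TV) : R :=
  \sum_(i < n) \sum_(j < m)
     mi_term (fine (P (U @^-1` F i `&` V @^-1` G j)))
             (fine (P (U @^-1` F i))) (fine (P (V @^-1` G j))).

(* General mutual information (Gelfand--Yaglom--Dobrushin): the supremum of
   the mutual information of finite measurable quantizations of U and V. *)
Definition mutual_info (R : realType) dO (O : measurableType dO)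
    (P : set O -> \bar R) du (TU : measurableType du) dv (TV : measurableType dv)
    (U : O -> TU) (V : O -> TV) : \bar R :=
  ereal_sup [set x | exists n m (F : 'I_n -> set TU) (G : 'I_m -> set TV),
     [/\ fin_meas_partition F, fin_meas_partition G
        & x = (quantized_mi P U V F G)%:E]].

(* The region R_CE: pairs (I(Y;Z), I(A;Z)) over all randomized representations
   Z = g(X,S), with S ~ nu on an arbitrary measurable space TS, independent of
   (X,A,Y): the underlying space is Omega x TS with the product law P (x) nu. *)
Definition region_CE (R : realType) dO (O : measurableType dO)
    (P : probability O R) dX (TX : measurableType dX)
    (X : O -> TX) (A Y : O -> bool) : set (R * R)%type :=
  [set v | exists dS (TS : measurableType dS) (nu : probability TS R)
             dZ (TZ : measurableType dZ) (g : (TX * TS)%type -> TZ),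
     measurable_fun setT g /\
     v = (fine (mutual_info (P \x nu)%E (fun w : (O * TS)%type => Y w.1)
                  (fun w : (O * TS)%type => g (X w.1, w.2))),
          fine (mutual_info (P \x nu)%E (fun w : (O * TS)%type => A w.1)
                  (fun w : (O * TS)%type => g (X w.1, w.2))))].

(* Main.v *)
Require Import Defs.
From HB Require Import structures.
From mathcomp Require Import all_boot all_order all_algebra.
From mathcomp Require Import all_classical all_reals all_analysis.
From mathcomp Require Import ring lra.
Import Order.TTheory GRing.Theory Num.Theory.
Local Open Scope classical_set_scope.
Local Open Scope ring_scope.
Set Implicit Arguments. Unset Strict Implicit. Unset Printing Implicit Defensive.


Section reals.
Context {R : realType}.
Implicit Types p q a c k : R.

Definition Lf p q : R := if p == 0 then 0 else p * ln (p / q).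

Lemma mi_termE p a c : mi_term p a c = Lf p (a * c).
Proof. by []. Qed.

Lemma ln_le_sub1 (x : R) : 0 < x -> ln x <= x - 1.
Proof.
move=> x0; have := @le_ln1Dx R (x - 1).
have -> : 1 + (x - 1) = x by ring.
apply; lra.
Qed.

Lemma Lf0 q : Lf 0 q = 0.
Proof. by rewrite /Lf eqxx. Qed.

Lemma Lf_mono p q1 q2 : 0 <= p -> (0 < p -> 0 < q1) -> q1 <= q2 -> Lf p q2 <= Lf p q1.
Proof.
move=> p0 hq q12; rewrite /Lf; case: eqP => // /eqP pn0.
have pp : 0 < p by rewrite lt_def pn0.
have q1p := hq pp; have q2p : 0 < q2 by apply: lt_le_trans q12.
rewrite ler_wpM2l // ler_ln ?posrE ?divr_gt0 //.
by rewrite ler_pM2l // lef_pV2 ?posrE.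
Qed.

Lemma logsum2 p1 p2 q1 q2 : 0 <= p1 -> 0 <= p2 -> 0 <= q1 -> 0 <= q2 ->
  (0 < p1 -> 0 < q1) -> (0 < p2 -> 0 < q2) ->
  Lf (p1 + p2) (q1 + q2) <= Lf p1 q1 + Lf p2 q2.
Proof.
move=> p10 p20 q10 q20 h1 h2.
have [->|p1n0] := eqVneq p1 0.
  rewrite add0r Lf0 add0r; apply: Lf_mono => //; lra.
have [->|p2n0] := eqVneq p2 0.
  rewrite addr0 Lf0 addr0; apply: Lf_mono => //; lra.
have p1p : 0 < p1 by rewrite lt_def p1n0.
have p2p : 0 < p2 by rewrite lt_def p2n0.
have q1p := h1 p1p; have q2p := h2 p2p.
set P := p1 + p2; set Q := q1 + q2.
have Pp : 0 < P by rewrite /P; lra.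
have Qp : 0 < Q by rewrite /Q; lra.
rewrite /Lf (negbTE p1n0) (negbTE p2n0) (gt_eqF Pp).
set r1 := (q1 * P) / (p1 * Q); set r2 := (q2 * P) / (p2 * Q).
have r1p : 0 < r1 by rewrite /r1 divr_gt0 // mulr_gt0.
have r2p : 0 < r2 by rewrite /r2 divr_gt0 // mulr_gt0.
have e1 : p1 / q1 = (P / Q) * r1^-1.
  rewrite /r1; field; rewrite ?gt_eqF //; apply/and3P; split; rewrite gt_eqF //.
have e2 : p2 / q2 = (P / Q) * r2^-1.
  rewrite /r2; field; rewrite ?gt_eqF //; apply/and3P; split; rewrite gt_eqF //.
rewrite e1 e2.
rewrite !lnM ?posrE ?invr_gt0 ?divr_gt0 //.
rewrite !lnV ?posrE //.
have l1 := ln_le_sub1 r1p; have l2 := ln_le_sub1 r2p.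
have s1 : p1 * ln r1 <= p1 * (r1 - 1) by rewrite ler_wpM2l // ltW.
have s2 : p2 * ln r2 <= p2 * (r2 - 1) by rewrite ler_wpM2l // ltW.
have e : p1 * (r1 - 1) + p2 * (r2 - 1) = 0.
  rewrite /r1 /r2 /P /Q; field.
  by rewrite p1n0 p2n0 -/Q gt_eqF.
set L := ln P - ln Q.
have -> : P * L = p1 * L + p2 * L by rewrite /P mulrDl.
rewrite !mulrBr; lra.
all: by rewrite mulr_gt0.
Qed.


Lemma Lf_scale k p q : 0 < k -> Lf (k * p) (k * q) = k * Lf p q.
Proof.
move=> k0; rewrite /Lf mulf_eq0 (gt_eqF k0) /=.
case: eqP => [_|_]; first by rewrite mulr0.
by rewrite invfM mulrACA mulfV ?gt_eqF // mul1r mulrA.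
Qed.

Lemma Lf_self c : Lf c c = 0.
Proof.
rewrite /Lf; case: eqP => // /eqP c0.
by rewrite mulfV // ln1 mulr0.
Qed.

Definition hh a : R := if a == 0 then 0 else - ln a.

Lemma hh_ge0 a : 0 <= a -> a <= 1 -> 0 <= hh a.
Proof.
move=> a0 a1; rewrite /hh; case: eqP => // _.
by rewrite oppr_ge0 ln_le0.
Qed.

Lemma Lf_bound p a c : 0 <= p -> p <= a -> p <= c ->
  Lf p (a * c) <= p * hh a.
Proof.
move=> p0 pa pc; rewrite /Lf /hh.
case: eqP => [->|/eqP pn0]; first by rewrite mul0r.
have pp : 0 < p by rewrite lt_def pn0.
have ap : 0 < a by apply: lt_le_trans pa.
have cp : 0 < c by apply: lt_le_trans pc.
rewrite (gt_eqF ap) ler_wpM2l //.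
have -> : p / (a * c) = (p / c) * a^-1 by rewrite invfM mulrA mulrAC.
rewrite lnM ?posrE ?invr_gt0 ?divr_gt0 // lnV ?posrE //.
have : ln (p / c) <= 0 by rewrite ln_le0 // ler_pdivrMr // mul1r.
lra.
Qed.


Lemma mi_conv t p1 p2 a c1 c2 : 0 < t < 1 ->
  0 <= p1 -> p1 <= a -> p1 <= c1 -> 0 <= p2 -> p2 <= a -> p2 <= c2 ->
  mi_term (t * p1 + (1 - t) * p2) a (t * c1 + (1 - t) * c2) <=
  t * mi_term p1 a c1 + (1 - t) * mi_term p2 a c2.
Proof.
move=> /andP[t0 t1] p10 p1a p1c p20 p2a p2c.
have t1' : 0 < 1 - t by rewrite subr_gt0.
rewrite !mi_termE -(Lf_scale _ _ t0) -(Lf_scale _ _ t1').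
have -> : a * (t * c1 + (1 - t) * c2) = t * (a * c1) + (1 - t) * (a * c2) by ring.
apply: logsum2; rewrite ?mulr_ge0 ?(ltW t0) ?(ltW t1') //.
- exact: le_trans p1a.
- exact: le_trans p1c.
- exact: le_trans p2a.
- exact: le_trans p2c.
- rewrite pmulr_rgt0 // => h; rewrite pmulr_rgt0 // mulr_gt0 //.
  + exact: lt_le_trans p1a.
  + exact: lt_le_trans p1c.
- rewrite pmulr_rgt0 // => h; rewrite pmulr_rgt0 // mulr_gt0 //.
  + exact: lt_le_trans p2a.
  + exact: lt_le_trans p2c.
Qed.

Lemma mi_conv' t p p1 p2 a a1 a2 c c1 c2 : 0 < t < 1 ->
  p = t * p1 + (1 - t) * p2 -> a1 = a -> a2 = a -> c = t * c1 + (1 - t) * c2 ->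
  0 <= p1 -> p1 <= a1 -> p1 <= c1 -> 0 <= p2 -> p2 <= a2 -> p2 <= c2 ->
  mi_term p a c <= t * mi_term p1 a1 c1 + (1 - t) * mi_term p2 a2 c2.
Proof. by move=> ht -> -> -> ->; apply: mi_conv. Qed.

Lemma mi_scale t p a c : 0 < t -> mi_term (t * p) a (t * c) = t * mi_term p a c.
Proof.
move=> t0; rewrite !mi_termE -Lf_scale //; congr Lf; ring.
Qed.

Lemma mi_scale' t p p1 a a1 c c1 : 0 < t ->
  p = t * p1 -> a = a1 -> c = t * c1 -> mi_term p a c = t * mi_term p1 a1 c1.
Proof. by move=> t0 -> -> ->; apply: mi_scale. Qed.

End reals.


Section qmi.
Context {R : realType} dW (W : measurableType dW) (Q : {measure set W -> \bar R}).
Hypothesis Q1 : Q setT = 1%E.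
Context dV (TV : measurableType dV) (U : W -> bool) (V : W -> TV).
Hypotheses (mU : measurable_fun setT U) (mV : measurable_fun setT V).

Definition pr (A : set W) : R := fine (Q A).

Lemma Q_fin A : measurable A -> Q A \is a fin_num.
Proof.
move=> mA; rewrite ge0_fin_numE //.
by apply: (@le_lt_trans _ _ (Q setT)); [apply: le_measure; rewrite ?inE | rewrite Q1 ltry].
Qed.

Lemma prE A : measurable A -> (pr A)%:E = Q A.
Proof. by move=> mA; rewrite /pr fineK // Q_fin. Qed.

Lemma pr_ge0 A : 0 <= pr A.
Proof. exact: fine_ge0. Qed.

Lemma pr_le A B : measurable A -> measurable B -> A `<=` B -> pr A <= pr B.
Proof.
move=> mA mB AB; rewrite -lee_fin !prE //.
by apply: le_measure; rewrite ?inE.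
Qed.

Lemma prT : pr setT = 1.
Proof. by rewrite /pr Q1. Qed.

Lemma pr_le1 A : measurable A -> pr A <= 1.
Proof. by move=> mA; rewrite -prT; apply: pr_le. Qed.

Lemma pr0 : pr set0 = 0.
Proof. by rewrite /pr measure0. Qed.

Lemma prU A B : measurable A -> measurable B -> A `&` B = set0 ->
  pr (A `|` B) = pr A + pr B.
Proof.
move=> mA mB AB; rewrite /pr measureU // fineD // Q_fin //.
Qed.

Lemma mpreU (S : set bool) : measurable (U @^-1` S).
Proof. by rewrite -[U @^-1` S]setTI; exact: mU. Qed.

Lemma mpreV (S : set TV) : measurable S -> measurable (V @^-1` S).
Proof. by move=> mS; rewrite -[V @^-1` S]setTI; exact: mV. Qed.

Definition phi (S : set bool) {m} (G : 'I_m -> set TV) : R :=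
  \sum_(j < m) mi_term (pr (U @^-1` S `&` V @^-1` G j)) (pr (U @^-1` S))
     (pr (V @^-1` G j)).

Lemma qmiE n (F : 'I_n -> set bool) m (G : 'I_m -> set TV) :
  quantized_mi Q U V F G = \sum_(i < n) phi (F i) G.
Proof. by []. Qed.

Definition Fc : 'I_2 -> set bool := fun i => [set ((i : nat) == 0%N)].

Lemma Fc_part : fin_meas_partition Fc.
Proof.
split => //.
- move=> i j ij; apply/seteqP; split => // b [] /= -> /eqP.
  by case: i j ij => -[|[|]] // ? [[|[|]] //].
- by case; [exists ord0 | exists (lift ord0 ord0)].
Qed.


Lemma phi0 m (G : 'I_m -> set TV) : phi set0 G = 0.
Proof.
rewrite /phi big1 // => j _.
by rewrite preimage_set0 set0I pr0 /mi_term eqxx.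
Qed.

Lemma phiT m (G : 'I_m -> set TV) : phi setT G = 0.
Proof.
rewrite /phi big1 // => j _.
by rewrite preimage_setT setTI prT mi_termE mul1r Lf_self.
Qed.

Lemma qmi_Fc m (G : 'I_m -> set TV) :
  quantized_mi Q U V Fc G = phi [set true] G + phi [set false] G.
Proof. by rewrite qmiE !big_ord_recl big_ord0 addr0. Qed.

Lemma pre_split (S : set TV) :
  (U @^-1` [set true] `&` V @^-1` S) `|` (U @^-1` [set false] `&` V @^-1` S)
  = V @^-1` S.
Proof.
apply/seteqP; split => w /=; first by case=> -[].
by move=> h; case E: (U w); [left|right].
Qed.

Lemma pre_disj (S S' : set TV) :
  (U @^-1` [set true] `&` V @^-1` S) `&` (U @^-1` [set false] `&` V @^-1` S')
  = set0.
Proof. by apply/seteqP; split => w //= [[-> _] [] ]. Qed.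

Lemma phiTF_ge0 m (G : 'I_m -> set TV) : (forall j, measurable (G j)) ->
  0 <= phi [set true] G + phi [set false] G.
Proof.
move=> mG; rewrite /phi -big_split /=; apply: sumr_ge0 => j _.
set AT := _ `&` _; set AF := U @^-1` [set false] `&` _.
have mAT : measurable AT by apply: measurableI; [apply: mpreU|apply: mpreV].
have mAF : measurable AF by apply: measurableI; [apply: mpreU|apply: mpreV].
have e1 : pr AT + pr AF = pr (V @^-1` G j).
  by rewrite -prU // ?pre_split // pre_disj.
have e2 : pr (U @^-1` [set true]) + pr (U @^-1` [set false]) = 1.
  rewrite -prU; [|exact: mpreU|exact: mpreU|by apply/seteqP; split => w //= [->]].
  by rewrite -prT; congr pr; apply/seteqP; split => w //= _; case: (U w); [left|right].
rewrite !mi_termE.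
have pTa : pr AT <= pr (U @^-1` [set true]) by apply: pr_le => //; [apply: mpreU | apply: subIsetl].
have pTc : pr AT <= pr (V @^-1` G j) by apply: pr_le => //; [apply: mpreV | apply: subIsetr].
have pFa : pr AF <= pr (U @^-1` [set false]) by apply: pr_le => //; [apply: mpreU | apply: subIsetl].
have pFc : pr AF <= pr (V @^-1` G j) by apply: pr_le => //; [apply: mpreV | apply: subIsetr].
have := @logsum2 R (pr AT) (pr AF) (pr (U @^-1` [set true]) * pr (V @^-1` G j))
  (pr (U @^-1` [set false]) * pr (V @^-1` G j)).
rewrite e1 -mulrDl e2 mul1r Lf_self; apply; rewrite ?mulr_ge0 ?pr_ge0 //.
- by move=> h; rewrite mulr_gt0 //; apply: lt_le_trans h _.
- by move=> h; rewrite mulr_gt0 //; apply: lt_le_trans h _.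
Qed.


Lemma qmi_le_Fc {n} {F : 'I_n -> set bool} {m} {G : 'I_m -> set TV} :
  fin_meas_partition F -> (forall j, measurable (G j)) ->
  quantized_mi Q U V F G <= quantized_mi Q U V Fc G.
Proof.
case=> _ hdisj hcov mG.
have [iT hT] := hcov true; have [iF hFf] := hcov false.
have nin : forall i j b, i != j -> F i b -> F j b -> False.
  move=> i j b ij h1 h2; have := hdisj i j ij.
  by move/seteqP => [+ _] => /(_ b (conj h1 h2)).
have others : forall i, i != iT -> i != iF -> F i = set0.
  move=> i h1 h2; apply/seteqP; split => // b Fib.
  by case: b Fib => Fib; [apply: (nin i iT true) | apply: (nin i iF false)].
rewrite qmiE qmi_Fc (bigD1 iT) //=.
have [e|ne] := eqVneq iT iF.
- have -> : F iT = setT.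
    by apply/seteqP; split => // -[] _ //; rewrite e.
  rewrite phiT add0r big1; first exact: phiTF_ge0.
  by move=> i hi; rewrite others ?phi0 // -e.
- have eT : F iT = [set true].
    apply/seteqP; split => [[]|b ->] // h; exfalso.
    exact: (nin iT iF false ne h hFf).
  have eF : F iF = [set false].
    apply/seteqP; split => [[]|b ->] // h; exfalso.
    by apply: (nin iT iF true ne hT h).
  rewrite (bigD1 iF) /=; last by rewrite eq_sym ne.
  rewrite big1 ?addr0 ?eT ?eF //.
  by move=> i /andP[h1 h2]; rewrite others ?phi0.
Qed.

Lemma phi_bound (S : set bool) {m} (G : 'I_m -> set TV) :
  fin_meas_partition G -> phi S G <= hh (pr (U @^-1` S)).
Proof.
case=> mG hdisj _.
set a := pr (U @^-1` S).
have mA : forall j, measurable (U @^-1` S `&` V @^-1` G j).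
  by move=> j; apply: measurableI; [apply: mpreU | apply: mpreV].
apply: (@le_trans _ _ (\sum_(j < m) pr (U @^-1` S `&` V @^-1` G j) * hh a)).
  apply: ler_sum => j _; rewrite mi_termE.
  apply: Lf_bound.
  - exact: pr_ge0.
  - by apply: pr_le; [apply: mA | apply: mpreU | apply: subIsetl].
  - by apply: pr_le; [apply: mA | apply: mpreV | apply: subIsetr].
rewrite -mulr_suml -[leRHS]mul1r ler_wpM2r //.
  by apply: hh_ge0; [exact: pr_ge0 | apply: pr_le1; apply: mpreU].
rewrite -lee_fin -sumEFin.
rewrite (eq_bigr (fun j => Q (U @^-1` S `&` V @^-1` G j))); last first.
  by move=> j _; rewrite prE.
rewrite -measure_semi_additive_ord //; last first.
- by apply: bigsetU_measurable => j _.
- move=> i j _ _ [w [[_ h1] [_ h2]]]; apply/eqP; apply: contraT => ij.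
  have := hdisj i j ij; move/seteqP => [+ _] => /(_ (V w) (conj h1 h2)).
  by [].
rewrite -Q1; apply: le_measure; rewrite ?inE //.
by apply: bigsetU_measurable => j _.
Qed.


Definition Gtriv : 'I_1 -> set TV := fun _ => setT.

Lemma Gtriv_part : fin_meas_partition Gtriv.
Proof.
split; first by move=> i; exact: measurableT.
  by move=> i j; rewrite !ord1 eqxx.
by move=> t; exists ord0.
Qed.

Lemma MI_in {n m} {F : 'I_n -> set bool} {G : 'I_m -> set TV} :
  fin_meas_partition F -> fin_meas_partition G ->
  ((quantized_mi Q U V F G)%:E <= mutual_info Q U V)%E.
Proof.
by move=> hF hG; apply: ereal_sup_ubound; exists n, m, F, G.
Qed.

Lemma MI_fin : mutual_info Q U V = (fine (mutual_info Q U V))%:E.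
Proof.
have h1 := MI_in Fc_part Gtriv_part.
have h2 : (mutual_info Q U V <=
   (hh (pr (U @^-1` [set true])) + hh (pr (U @^-1` [set false])))%:E)%E.
  apply: ge_ereal_sup => _ [n [m [F [G [hF hG ->]]]]].
  rewrite lee_fin; apply: le_trans (qmi_le_Fc hF _) _.
    by case: hG.
  by rewrite qmi_Fc; apply: lerD; apply: phi_bound.
move: h1 h2; case: (mutual_info Q U V) => //.
Qed.

Lemma MI_ge {n m} {F : 'I_n -> set bool} {G : 'I_m -> set TV} :
  fin_meas_partition F -> fin_meas_partition G ->
  quantized_mi Q U V F G <= fine (mutual_info Q U V).
Proof. by move=> hF hG; rewrite -lee_fin -MI_fin; apply: MI_in. Qed.

Lemma MI_le (x : R) :
  (forall m (G : 'I_m -> set TV), fin_meas_partition G ->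
     quantized_mi Q U V Fc G <= x) ->
  fine (mutual_info Q U V) <= x.
Proof.
move=> h; rewrite -lee_fin -MI_fin.
apply: ge_ereal_sup => _ [n [m [F [G [hF hG ->]]]]].
rewrite lee_fin; apply: le_trans (qmi_le_Fc hF _) _; last exact: h.
by case: hG.
Qed.

End qmi.


Section pprod.
Context d1 d2 (T1 : measurableType d1) (T2 : measurableType d2) (R : realType)
  (m1 : probability T1 R) (m2 : probability T2 R).
Definition pprod := (m1 \x m2)%E.
HB.instance Definition _ := Measure.on pprod.
Lemma pprod_setT : pprod setT = 1%E.
Proof.
rewrite /pprod -setXTT product_measure1E //.
transitivity (1 * 1 : \bar R)%E; last by rewrite mule1.
by congr (_ * _)%E; [exact: probability_setT | exact: probability_setT].
Qed.
HB.instance Definition _ := Measure_isProbability.Build _ _ _ pprod pprod_setT.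
End pprod.
Arguments pprod {d1 d2 T1 T2 R}.

Lemma prod_setT d1 d2 (T1 : measurableType d1) (T2 : measurableType d2) (R : realType)
  (m1 : probability T1 R) (m2 : probability T2 R) : (m1 \x m2)%E setT = 1%E.
Proof.
rewrite -setXTT product_measure1E //.
transitivity (1 * 1 : \bar R)%E; last by rewrite mule1.
by congr (_ * _)%E; [exact: probability_setT | exact: probability_setT].
Qed.

Lemma prod_fst d1 d2 (T1 : measurableType d1) (T2 : measurableType d2) (R : realType)
  (m1 : probability T1 R) (m2 : probability T2 R) (A : set T1) : measurable A ->
  (m1 \x m2)%E [set w | A w.1] = m1 A.
Proof.
move=> mA; rewrite -[X in _ X = _]setXT ?product_measure1E //.
transitivity (m1 A * 1)%E; last by rewrite mule1.
by congr (_ * _)%E; exact: probability_setT.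
Qed.

Lemma mpre d1 d2 (T1 : measurableType d1) (T2 : measurableType d2) (f : T1 -> T2)
  (H : set T2) : measurable_fun setT f -> measurable H -> measurable (f @^-1` H).
Proof. by move=> mf mH; rewrite -[_ @^-1` _]setTI; exact: mf. Qed.
Arguments mpre {d1 d2 T1 T2 f H}.


Section mix.
Context {R : realType} dO (O : measurableType dO) (P : probability O R)
  dX (TX : measurableType dX) (X : O -> TX) (mX : measurable_fun setT X).
Context dS1 (TS1 : measurableType dS1) (nu1 : probability TS1 R)
  dZ1 (TZ1 : measurableType dZ1) (g1 : (TX * TS1)%type -> TZ1)
  (mg1 : measurable_fun setT g1).
Context dS2 (TS2 : measurableType dS2) (nu2 : probability TS2 R)
  dZ2 (TZ2 : measurableType dZ2) (g2 : (TX * TS2)%type -> TZ2)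
  (mg2 : measurable_fun setT g2).
Variable t : R.
Hypothesis t01 : 0 <= t <= 1.

Definition nuM := pprod (bernoulli_prob t) (pprod nu1 nu2).

Definition gM (xs : (TX * (bool * (TS1 * TS2)))%type) : (bool * (TZ1 * TZ2))%type :=
  (xs.2.1, (if xs.2.1 then g1 (xs.1, xs.2.2.1) else point,
            if xs.2.1 then point else g2 (xs.1, xs.2.2.2))).

Lemma mgM : measurable_fun setT gM.
Proof.
have mb : measurable_fun setT (fun xs : (TX * (bool * (TS1 * TS2)))%type => xs.2.1).
  exact: measurableT_comp measurable_fst measurable_snd.
apply: measurable_fun_pair => //; apply: measurable_fun_pair.
- apply: measurable_fun_ifT => //.
  apply: measurableT_comp mg1 _; apply: measurable_fun_pair => //.
  apply: measurableT_comp measurable_fst _.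
  exact: measurableT_comp measurable_snd measurable_snd.
- apply: measurable_fun_ifT => //.
  apply: measurableT_comp mg2 _; apply: measurable_fun_pair => //.
  apply: measurableT_comp measurable_snd _.
  exact: measurableT_comp measurable_snd measurable_snd.
Qed.

Lemma mw1 : measurable_fun setT
  (fun w : (O * TS1)%type => (w.1, (true, (g1 (X w.1, w.2), point : TZ2)))).
Proof.
apply: measurable_fun_pair => //; apply: measurable_fun_pair => //.
apply: measurable_fun_pair => //.
apply: measurableT_comp mg1 _; apply: measurable_fun_pair => //.
exact: measurableT_comp mX measurable_fst.
Qed.

Lemma mw2 : measurable_fun setT
  (fun w : (O * TS2)%type => (w.1, (false, (point : TZ1, g2 (X w.1, w.2))))).
Proof.
apply: measurable_fun_pair => //; apply: measurable_fun_pair => //.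
apply: measurable_fun_pair => //.
apply: measurableT_comp mg2 _; apply: measurable_fun_pair => //.
exact: measurableT_comp mX measurable_fst.
Qed.

Lemma mwM : measurable_fun setT
  (fun w : (O * (bool * (TS1 * TS2)))%type => (w.1, gM (X w.1, w.2))).
Proof.
apply: measurable_fun_pair => //; apply: measurableT_comp mgM _.
apply: measurable_fun_pair => //.
exact: measurableT_comp mX measurable_fst.
Qed.


Let nuMp : probability (bool * (TS1 * TS2))%type R := nuM.

Lemma mixE (H : set (O * (bool * (TZ1 * TZ2)))%type) : measurable H ->
  (P \x nuM)%E [set w | H (w.1, gM (X w.1, w.2))] =
  (t%:E * (P \x nu1)%E [set w | H (w.1, (true, (g1 (X w.1, w.2), point)))] +
   (1 - t)%:E * (P \x nu2)%E [set w | H (w.1, (false, (point, g2 (X w.1, w.2))))])%E.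
Proof.
move=> mH.
set E1 := [set w | H (w.1, (true, (g1 (X w.1, w.2), point)))].
set E2 := [set w | H (w.1, (false, (point, g2 (X w.1, w.2))))].
have mE1 : measurable E1 by apply: (mpre mw1 mH).
have mE2 : measurable E2 by apply: (mpre mw2 mH).
have t0 : 0 <= t by case/andP: t01.
have t1 : 0 <= 1 - t by case/andP: t01 => _; rewrite subr_ge0.
rewrite /product_measure1 -ge0_integralZl_EFin //; last first.
  exact: measurable_fun_xsection.
rewrite -ge0_integralZl_EFin //; last exact: measurable_fun_xsection.
rewrite -ge0_integralD //; first last.
- by apply: measurable_funeM; exact: measurable_fun_xsection.
- by move=> x _; rewrite mule_ge0.
- by apply: measurable_funeM; exact: measurable_fun_xsection.
- by move=> x _; rewrite mule_ge0.
apply: eq_integral => w _ /=.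
set E := [set w | H (w.1, gM (X w.1, w.2))].
have -> : nuM (xsection E w) =
    (\int[bernoulli_prob t]_b (pprod nu1 nu2 (xsection (xsection E w) b)))%E by [].
rewrite integral_bernoulli_prob //.
have eT : xsection (xsection E w) true = xsection E1 w `*` setT.
  apply/seteqP; split => -[s1 s2]; rewrite /xsection /= !inE /=.
  - by move=> /set_mem h; split.
  - by case=> h _; apply: mem_set.
have eF : xsection (xsection E w) false = setT `*` xsection E2 w.
  apply/seteqP; split => -[s1 s2]; rewrite /xsection /= !inE /=.
  - by move=> /set_mem h; split.
  - by case=> _ h; apply: mem_set.
rewrite eT eF /pprod !product_measure1E //; try exact: measurable_xsection.
congr (_ * _ + _ * _)%E.
- transitivity (nu1 (xsection E1 w) * 1)%E; last by rewrite mule1.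
  by congr (_ * _)%E; exact: probability_setT.
- transitivity (1 * nu2 (xsection E2 w))%E; last by rewrite mul1e.
  by congr (_ * _)%E; exact: probability_setT.
Qed.

Variable U : O -> bool.
Hypothesis mU : measurable_fun setT U.

Let QM := (P \x nuM)%E.
Let Q1m := (P \x nu1)%E.
Let Q2m := (P \x nu2)%E.
Let UM := fun w : (O * (bool * (TS1 * TS2)))%type => U w.1.
Let VM := fun w : (O * (bool * (TS1 * TS2)))%type => gM (X w.1, w.2).
Let U1 := fun w : (O * TS1)%type => U w.1.
Let V1 := fun w : (O * TS1)%type => g1 (X w.1, w.2).
Let U2 := fun w : (O * TS2)%type => U w.1.
Let V2 := fun w : (O * TS2)%type => g2 (X w.1, w.2).

Lemma QM1 : QM setT = 1%E. Proof. exact: prod_setT. Qed.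
Lemma Q1m1 : Q1m setT = 1%E. Proof. exact: prod_setT. Qed.
Lemma Q2m1 : Q2m setT = 1%E. Proof. exact: prod_setT. Qed.

Lemma mUM : measurable_fun setT UM.
Proof. exact: measurableT_comp mU measurable_fst. Qed.
Lemma mU1 : measurable_fun setT U1.
Proof. exact: measurableT_comp mU measurable_fst. Qed.
Lemma mU2 : measurable_fun setT U2.
Proof. exact: measurableT_comp mU measurable_fst. Qed.
Lemma mVM : measurable_fun setT VM.
Proof.
apply: measurableT_comp mgM _; apply: measurable_fun_pair => //.
exact: measurableT_comp mX measurable_fst.
Qed.
Lemma mV1 : measurable_fun setT V1.
Proof.
apply: measurableT_comp mg1 _; apply: measurable_fun_pair => //.
exact: measurableT_comp mX measurable_fst.
Qed.
Lemma mV2 : measurable_fun setT V2.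
Proof.
apply: measurableT_comp mg2 _; apply: measurable_fun_pair => //.
exact: measurableT_comp mX measurable_fst.
Qed.

Definition sec1 (S' : set (bool * (TZ1 * TZ2))%type) : set TZ1 :=
  [set z | S' (true, (z, point))].
Definition sec2 (S' : set (bool * (TZ1 * TZ2))%type) : set TZ2 :=
  [set z | S' (false, (point, z))].

Lemma msec1 S' : measurable S' -> measurable (sec1 S').
Proof.
move=> mS'; apply: (mpre _ mS') => /=.
by apply: measurable_fun_pair => //; apply: measurable_fun_pair.
Qed.
Lemma msec2 S' : measurable S' -> measurable (sec2 S').
Proof.
move=> mS'; apply: (mpre _ mS') => /=.
by apply: measurable_fun_pair => //; apply: measurable_fun_pair.
Qed.

Lemma cellM (S : set bool) (S' : set (bool * (TZ1 * TZ2))%type) : measurable S' ->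
  pr QM (UM @^-1` S `&` VM @^-1` S') =
  t * pr Q1m (U1 @^-1` S `&` V1 @^-1` sec1 S') +
  (1 - t) * pr Q2m (U2 @^-1` S `&` V2 @^-1` sec2 S').
Proof.
move=> mS'.
have mS : measurable (U @^-1` S) by apply: mpre.
apply: EFin_inj; rewrite EFinD !EFinM !prE.
- exact: (mixE (measurableX mS mS')).
- exact: Q2m1.
- apply: measurableI; [exact: mpre mU2 _ | exact: mpre mV2 (msec2 mS')].
- exact: Q1m1.
- apply: measurableI; [exact: mpre mU1 _ | exact: mpre mV1 (msec1 mS')].
- exact: QM1.
- apply: measurableI; [exact: mpre mUM _ | exact: mpre mVM mS'].
Qed.

Lemma aM S : pr QM (UM @^-1` S) = pr P (U @^-1` S).
Proof. by rewrite /pr; congr fine; apply: (prod_fst P nuM); apply: mpre. Qed.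
Lemma a1 S : pr Q1m (U1 @^-1` S) = pr P (U @^-1` S).
Proof. by rewrite /pr; congr fine; apply: (prod_fst P nu1); apply: mpre. Qed.
Lemma a2 S : pr Q2m (U2 @^-1` S) = pr P (U @^-1` S).
Proof. by rewrite /pr; congr fine; apply: (prod_fst P nu2); apply: mpre. Qed.

Lemma cM (S' : set (bool * (TZ1 * TZ2))%type) : measurable S' ->
  pr QM (VM @^-1` S') =
  t * pr Q1m (V1 @^-1` sec1 S') + (1 - t) * pr Q2m (V2 @^-1` sec2 S').
Proof. by move=> mS'; have := cellM setT mS'; rewrite !preimage_setT !setTI. Qed.

Lemma qmi_mix_le n (F : 'I_n -> set bool) m (G : 'I_m -> set (bool * (TZ1 * TZ2))%type) :
  0 < t < 1 -> (forall j, measurable (G j)) ->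
  quantized_mi QM UM VM F G <=
  t * quantized_mi Q1m U1 V1 F (fun j => sec1 (G j)) +
  (1 - t) * quantized_mi Q2m U2 V2 F (fun j => sec2 (G j)).
Proof.
move=> ht mG; rewrite /quantized_mi !mulr_sumr -big_split; apply: ler_sum => i _.
rewrite !mulr_sumr -big_split; apply: ler_sum => j _ /=.
have mFi : measurable (U @^-1` F i) by apply: mpre.
apply: mi_conv'.
- exact: ht.
- exact: cellM.
- exact: (etrans (a1 _) (esym (aM _))).
- exact: (etrans (a2 _) (esym (aM _))).
- exact: cM.
- exact: pr_ge0.
- apply: (pr_le Q1m1).
  + apply: measurableI; [exact: mpre mU1 _ | exact: mpre mV1 (msec1 (mG j))].
  + exact: mpre mU1 _.
  + exact: subIsetl.
- apply: (pr_le Q1m1).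
  + apply: measurableI; [exact: mpre mU1 _ | exact: mpre mV1 (msec1 (mG j))].
  + exact: mpre mV1 (msec1 (mG j)).
  + exact: subIsetr.
- exact: pr_ge0.
- apply: (pr_le Q2m1).
  + apply: measurableI; [exact: mpre mU2 _ | exact: mpre mV2 (msec2 (mG j))].
  + exact: mpre mU2 _.
  + exact: subIsetl.
- apply: (pr_le Q2m1).
  + apply: measurableI; [exact: mpre mU2 _ | exact: mpre mV2 (msec2 (mG j))].
  + exact: mpre mV2 (msec2 (mG j)).
  + exact: subIsetr.
Qed.


Lemma sec1_part m (G : 'I_m -> set (bool * (TZ1 * TZ2))%type) :
  fin_meas_partition G -> fin_meas_partition (fun j => sec1 (G j)).
Proof.
case=> mG hd hc; split.
- by move=> j; apply: msec1.
- move=> i j ij; apply/seteqP; split => // z [h1 h2].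
  by have := hd i j ij; move/seteqP => [+ _] => /(_ _ (conj h1 h2)).
- by move=> z; have [i hi] := hc (true, (z, point)); exists i.
Qed.

Lemma sec2_part m (G : 'I_m -> set (bool * (TZ1 * TZ2))%type) :
  fin_meas_partition G -> fin_meas_partition (fun j => sec2 (G j)).
Proof.
case=> mG hd hc; split.
- by move=> j; apply: msec2.
- move=> i j ij; apply/seteqP; split => // z [h1 h2].
  by have := hd i j ij; move/seteqP => [+ _] => /(_ _ (conj h1 h2)).
- by move=> z; have [i hi] := hc (false, (point, z)); exists i.
Qed.

Definition Gm m1 m2 (G1 : 'I_m1 -> set TZ1) (G2 : 'I_m2 -> set TZ2) :
    'I_(m1 + m2) -> set (bool * (TZ1 * TZ2))%type :=
  fun k => match fintype.split k with
    | inl j => fst @^-1` [set true] `&` (fun z => z.2.1) @^-1` G1 j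
    | inr j => fst @^-1` [set false] `&` (fun z => z.2.2) @^-1` G2 j
    end.

Lemma split_l m1 m2 (j : 'I_m1) : fintype.split (lshift m2 j) = inl j.
Proof. exact: (unsplitK (inl j : 'I_m1 + 'I_m2)). Qed.
Lemma split_r m1 m2 (j : 'I_m2) : fintype.split (rshift m1 j) = inr j.
Proof. exact: (unsplitK (inr j : 'I_m1 + 'I_m2)). Qed.

Section Gm.
Variables (m1 m2 : nat) (G1 : 'I_m1 -> set TZ1) (G2 : 'I_m2 -> set TZ2).

Lemma secLL j : sec1 (Gm G1 G2 (lshift m2 j)) = G1 j.
Proof. by rewrite /Gm split_l; apply/seteqP; split => z /= => [[]|]. Qed.
Lemma secLR j : sec2 (Gm G1 G2 (lshift m2 j)) = set0.
Proof. by rewrite /Gm split_l; apply/seteqP; split => z //= => [[]]. Qed.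
Lemma secRL j : sec1 (Gm G1 G2 (rshift m1 j)) = set0.
Proof. by rewrite /Gm split_r; apply/seteqP; split => z //= => [[]]. Qed.
Lemma secRR j : sec2 (Gm G1 G2 (rshift m1 j)) = G2 j.
Proof. by rewrite /Gm split_r; apply/seteqP; split => z /= => [[]|]. Qed.

Lemma Gm_part : fin_meas_partition G1 -> fin_meas_partition G2 ->
  fin_meas_partition (Gm G1 G2).
Proof.
case=> mG1 hd1 hc1 [mG2 hd2 hc2]; split.
- move=> k; rewrite /Gm; case: (fintype.split k) => j; apply: measurableI.
  + by apply: (mpre measurable_fst).
  + apply: mpre (mG1 j).
    exact: measurableT_comp measurable_fst measurable_snd.
  + by apply: (mpre measurable_fst).
  + apply: mpre (mG2 j).
    exact: measurableT_comp measurable_snd measurable_snd.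
- move=> k l kl; rewrite /Gm.
  have kl' : fintype.split k != fintype.split l.
    by apply: contra kl => /eqP h; rewrite -(fintype.splitK k) -(fintype.splitK l) h.
  move: kl'; case: (fintype.split k) => i; case: (fintype.split l) => j //= ij;
    apply/seteqP; split => // z [[h1 h2] [h3 h4]].
  + by have := hd1 i j ij; move/seteqP => [+ _] => /(_ _ (conj h2 h4)).
  + by move: h1 h3 => /= ->.
  + by move: h1 h3 => /= ->.
  + by have := hd2 i j ij; move/seteqP => [+ _] => /(_ _ (conj h2 h4)).
- move=> [[] [z1 z2]].
  + have [j hj] := hc1 z1; exists (lshift m2 j); rewrite /Gm split_l; by split.
  + have [j hj] := hc2 z2; exists (rshift m1 j); rewrite /Gm split_r; by split.
Qed.

End Gm.

Lemma qmi_mix_eq n (F : 'I_n -> set bool) m1 m2 (G1 : 'I_m1 -> set TZ1)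
    (G2 : 'I_m2 -> set TZ2) :
  0 < t < 1 -> fin_meas_partition G1 -> fin_meas_partition G2 ->
  quantized_mi QM UM VM F (Gm G1 G2) =
  t * quantized_mi Q1m U1 V1 F G1 + (1 - t) * quantized_mi Q2m U2 V2 F G2.
Proof.
move=> /andP[t0 t1] hG1 hG2.
have t1' : 0 < 1 - t by rewrite subr_gt0.
have [mGm _ _] := Gm_part hG1 hG2.
rewrite /quantized_mi !mulr_sumr -big_split; apply: eq_bigr => i _ /=.
rewrite big_split_ord /= !mulr_sumr; congr (_ + _); apply: eq_bigr => j _.
- apply: mi_scale' => //.
  + apply: (etrans (cellM (F i) (mGm _))).
    by rewrite secLL secLR preimage_set0 setI0 pr0 mulr0 addr0.
  + exact: (etrans (aM _) (esym (a1 _))).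
  + apply: (etrans (cM (mGm _))).
    by rewrite secLL secLR preimage_set0 pr0 mulr0 addr0.
- apply: mi_scale' => //.
  + apply: (etrans (cellM (F i) (mGm _))).
    by rewrite secRL secRR preimage_set0 setI0 pr0 mulr0 add0r.
  + exact: (etrans (aM _) (esym (a2 _))).
  + apply: (etrans (cM (mGm _))).
    by rewrite secRL secRR preimage_set0 pr0 mulr0 add0r.
Qed.

Lemma MI_mix : 0 < t < 1 ->
  fine (mutual_info QM UM VM) =
  t * fine (mutual_info Q1m U1 V1) + (1 - t) * fine (mutual_info Q2m U2 V2).
Proof.
move=> ht; have /andP[t0 t1] := ht.
have t1' : 0 < 1 - t by rewrite subr_gt0.
apply/le_anti/andP; split.
- apply: (MI_le QM1 mUM mVM) => m G hG.
  apply: le_trans (qmi_mix_le Fc ht _) _; first by case: hG.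
  apply: lerD; apply: ler_wpM2l.
  + exact: ltW.
  + exact: (MI_ge Q1m1 mU1 mV1 Fc_part (sec1_part hG)).
  + exact: ltW.
  + exact: (MI_ge Q2m1 mU2 mV2 Fc_part (sec2_part hG)).
- set M := fine (mutual_info QM UM VM).
  rewrite -lerBrDr -ler_pdivlMl //.
  apply: (MI_le Q1m1 mU1 mV1) => m1 G1 hG1.
  rewrite ler_pdivlMl // lerBrDr addrC -lerBrDr -ler_pdivlMl //.
  apply: (MI_le Q2m1 mU2 mV2) => m2 G2 hG2.
  rewrite ler_pdivlMl // lerBrDr addrC.
  rewrite -qmi_mix_eq //.
  exact: (MI_ge QM1 mUM mVM Fc_part (Gm_part hG1 hG2)).
Qed.

End mix.


Unset Implicit Arguments.
Set Strict Implicit.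
Theorem proposition1 (R : realType) (dO : measure_display) (O : measurableType dO)
    (P : probability O R) (dX : measure_display) (TX : measurableType dX)
    (X : O -> TX) (A Y : O -> bool)
    (mX : measurable_fun setT X) (mA : measurable_fun setT A)
    (mY : measurable_fun setT Y) :
  convex_set (region_CE P X A Y : set (convex_lmodType (R * R)%type)).
Proof.
apply/convex_setW => x y /set_mem [dS1 [TS1 [nu1 [dZ1 [TZ1 [g1 [mg1 ->]]]]]]].
move=> /set_mem [dS2 [TS2 [nu2 [dZ2 [TZ2 [g2 [mg2 ->]]]]]]] k k0 k1.
have ht : 0 < k%:num < 1 by rewrite k0 k1.
have t01 : 0 <= k%:num <= 1 by rewrite ltW // ltW.
apply: mem_set.
exists _, _, (nuM nu1 nu2 k%:num : probability _ R), _, _, (gM g1 g2).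
split; first exact: mgM.
set a1 := fine (mutual_info (P \x nu1)%E (fun w : (O * TS1)%type => Y w.1) (fun w => g1 (X w.1, w.2))).
set b1 := fine (mutual_info (P \x nu1)%E (fun w : (O * TS1)%type => A w.1) (fun w => g1 (X w.1, w.2))).
set a2 := fine (mutual_info (P \x nu2)%E (fun w : (O * TS2)%type => Y w.1) (fun w => g2 (X w.1, w.2))).
set b2 := fine (mutual_info (P \x nu2)%E (fun w : (O * TS2)%type => A w.1) (fun w => g2 (X w.1, w.2))).
rewrite [LHS](_ : _ = (k%:num * a1 + (1 - k%:num) * a2, k%:num * b1 + (1 - k%:num) * b2)); last by [].
congr pair; apply/esym.
- exact: (MI_mix P mX nu1 mg1 nu2 mg2 t01 mY ht).
- exact: (MI_mix P mX nu1 mg1 nu2 mg2 t01 mA ht).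
Qed.
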